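(* Let $k$ be a field, $Q$ a finite connected quiver without oriented cycles with vertex set $Q_0$ and arrow set $Q_1$, let $m\geq 2$, and let $\Lambda=kQ/F^m$ be the $m$-truncated path algebra. Then $$\dim_k H^1(\Lambda,\Lambda)=1-|Q_0|+|Q_1/\!/B|,$$ where $B$ is the set of paths of $Q$ of length strictly less than $m$ (including vertices) and $Q_1/\!/B=\{(a,\varepsilon)\in Q_1\times B\mid s(\varepsilon)=s(a),\ t(\varepsilon)=t(a)\}$.
   Context: $kQ$ is the path algebra of $Q$; $F$ is the two-sided ideal generated by the arrows, so $F^m$ is the ideal generated by all paths of length $m$. $H^1(\Lambda,\Lambda)$ is the first Hochschild cohomology of $\Lambda$ (derivations modulo inner derivations). $s$ and $t$ denote source and target of arrows and paths. *)

(* Defs.v *)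
From HB Require Import structures.
From mathcomp Require Import all_boot all_order all_algebra.
Set Implicit Arguments. Unset Strict Implicit. Unset Printing Implicit Defensive.
Import GRing.Theory.
Local Open Scope ring_scope.

(* A quiver Q = (V, A, s, t): vertex finType V, arrow finType A,
   source map s and target map t. *)

Definition composable (V A : finType) (s t : A -> V) : rel A :=
  fun a b => t a == s b.

(* A path is a pair (v, w): v is its source vertex and w its word of arrows.
   (v, [::]) is the trivial path e_v; (v, a :: w') is a nonempty path
   whose first arrow a starts at v and whose arrows are composable. *)
Definition is_path (V A : finType) (s t : A -> V) (v : V) (w : seq A) : bool :=
  match w with
  | [::] => true
  | a :: w' => (s a == v) && path (composable s t) a w'
  end.

Definition path_src (V A : finType) (s t : A -> V) (v : V) (w : seq A) : V := v.
Definition path_tgt (V A : finType) (s t : A -> V) (v : V) (w : seq A) : V :=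
  match w with [::] => v | a :: w' => t (last a w') end.

Definition acyclic (V A : finType) (s t : A -> V) : Prop :=
  forall (a : A) (w : seq A), path (composable s t) a w -> t (last a w) != s a.

(* Q is connected: its underlying undirected graph is connected (and Q is
   nonempty, which is required separately). *)
Definition qconnected (V A : finType) (s t : A -> V) : Prop :=
  forall u v : V,
    connect (fun x y => [exists a : A, ((s a == x) && (t a == y))
                                     || ((s a == y) && (t a == x))]) u v.

Definition rawpath (V A : finType) (m : nat) : finType :=
  (V * {i : 'I_m & i.-tuple A})%type.

Definition raw_word (V A : finType) (m : nat) (x : rawpath V A m) : seq A :=
  tagged x.2.

Definition Bpaths (V A : finType) (s t : A -> V) (m : nat) : finType :=
  {x : rawpath V A m | is_path s t x.1 (raw_word x)}.

Section Truncated.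
Variables (V A : finType) (s t : A -> V) (m : nat).

Definition bsrc (p : Bpaths s t m) : V := (val p).1.
Definition bword (p : Bpaths s t m) : seq A := raw_word (val p).
Definition btgt (p : Bpaths s t m) : V := path_tgt s t (bsrc p) (bword p).

Definition iscat (p q r : Bpaths s t m) : bool :=
  [&& btgt p == bsrc q, bsrc r == bsrc p & bword r == bword p ++ bword q].

Definition nB := #|Bpaths s t m|.

(* The m-truncated path algebra Lambda = kQ/F^m, realised on its basis B:
   elements are row vectors of coordinates w.r.t. B, and the product of two
   basis paths is their concatenation if it is a path of length < m, else 0. *)
Variable k : fieldType.

Definition Lam := 'rV[k]_nB.

Definition lmul (x y : Lam) : Lam :=
  \row_r \sum_(i < nB) \sum_(j < nB)
     (x 0 i * y 0 j) *+ iscat (enum_val i) (enum_val j) (enum_val r).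

Definition bvec (i : 'I_nB) : Lam := delta_mx 0 i.

(* k-linear endomorphisms of Lambda are matrices D acting by x |-> x *m D. *)
Definition der_defect (D : 'M[k]_nB) : {ffun 'I_nB * 'I_nB -> Lam} :=
  [ffun ij => lmul (bvec ij.1) (bvec ij.2) *m D
              - lmul (bvec ij.1 *m D) (bvec ij.2)
              - lmul (bvec ij.1) (bvec ij.2 *m D)].

Definition Der : {vspace 'M[k]_nB} := lker (linfun der_defect).

Definition ad (a : Lam) : 'M[k]_nB :=
  \matrix_i (lmul a (bvec i) - lmul (bvec i) a).

Definition Inn : {vspace 'M[k]_nB} := limg (linfun ad).

Definition HH1dim : int := (\dim Der)%:Z - (\dim Inn)%:Z.

Definition Q1B : {set A * Bpaths s t m} :=
  [set x | (bsrc x.2 == s x.1) && (btgt x.2 == t x.1)].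

End Truncated.

(* Main.v *)
Require Import Defs.
From HB Require Import structures.
From mathcomp Require Import all_boot all_order all_algebra zify.
Set Implicit Arguments. Unset Strict Implicit. Unset Printing Implicit Defensive.
Import GRing.Theory.
Local Open Scope ring_scope.


Section Paths.
Variables (V A : finType) (s t : A -> V) (m : nat).
Local Notation P := (Bpaths s t m).
Local Notation ptgt := (path_tgt s t).
Local Notation ispath := (is_path s t).

Lemma ptgt_cat v w1 w2 : ptgt v (w1 ++ w2) = ptgt (ptgt v w1) w2.
Proof.
case: w1 => [|a w1] //=. case: w2 => [|b w2] /=; first by rewrite cats0.
by rewrite last_cat.
Qed.

Lemma ispath_cat v w1 w2 : ispath v (w1 ++ w2) = ispath v w1 && ispath (ptgt v w1) w2.
Proof.
case: w1 => [|a w1] //=. rewrite cat_path -andbA. congr (_ && (_ && _)).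
case: w2 => [|b w2] //=. by rewrite /composable eq_sym.
Qed.

Lemma bword_size (p : P) : (size (bword p) < m)%N.
Proof. case: p => [[v [i tu]] hp]; rewrite /bword /raw_word /= size_tuple; exact: ltn_ord. Qed.

Lemma bpathP (p : P) : ispath (bsrc p) (bword p).
Proof. exact: (valP p). Qed.

Lemma bkey_inj (p q : P) : bsrc p = bsrc q -> bword p = bword q -> p = q.
Proof.
case: p => [[v [i tu]] hp]; case: q => [[v' [j tu']] hq].
rewrite /bsrc /bword /raw_word /= => ev ew; subst v'.
have eij : i = j by apply: val_inj; rewrite /= -(size_tuple tu) -(size_tuple tu') ew.
subst j. have etu : tu = tu' by apply: val_inj.
subst tu'. by apply: val_inj.
Qed.

Lemma mkB v w : ispath v w -> (size w < m)%N -> {p : P | bsrc p = v /\ bword p = w}.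
Proof.
move=> hp hs.
exists (@Sub _ _ P (v, Tagged (fun i : 'I_m => i.-tuple A) (in_tuple w : (Ordinal hs).-tuple A)) hp).
by split.
Qed.

End Paths.


Section Alg.
Variables (V A : finType) (s t : A -> V) (m : nat) (k : fieldType).
Local Notation P := (Bpaths s t m).
Local Notation N := (nB s t m).
Local Notation ptgt := (path_tgt s t).
Local Notation ispath := (is_path s t).
Local Notation L := (Lam s t m k).

Definition ev (i : 'I_N) : P := enum_val i.
Definition rk (p : P) : 'I_N := enum_rank p.
Lemma evK p : ev (rk p) = p. Proof. exact: enum_rankK. Qed.
Lemma rkK i : rk (ev i) = i. Proof. exact: enum_valK. Qed.
Lemma ev_inj : injective ev. Proof. exact: (can_inj rkK). Qed.

Definition vecw (v : V) (w : seq A) : L :=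
  \row_r ((bsrc (ev r) == v) && (bword (ev r) == w))%:R.

Lemma vecw_rk p : vecw (bsrc p) (bword p) = bvec k (rk p).
Proof.
apply/rowP => r; rewrite /bvec !mxE /=; congr ((nat_of_bool _)%:R).
apply/idP/eqP => [/andP[/eqP e1 /eqP e2]|->]; last by rewrite evK !eqxx.
by rewrite -[r]rkK (bkey_inj e1 e2).
Qed.

Lemma bvecE i : bvec k i = vecw (bsrc (ev i)) (bword (ev i)).
Proof. by rewrite vecw_rk rkK. Qed.

Lemma vecw_none v w : (forall p : P, ~~ ((bsrc p == v) && (bword p == w))) -> vecw v w = 0.
Proof. move=> h; apply/rowP => r; rewrite !mxE; by rewrite (negbTE (h _)). Qed.

Lemma vecw_long v w : (m <= size w)%N -> vecw v w = 0.
Proof.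
move=> h; apply: vecw_none => p; apply/negP => /andP[_ /eqP e].
by move: (bword_size p); rewrite e ltnNge h.
Qed.

Lemma lmulDl x1 x2 y : lmul (x1 + x2) y = lmul x1 y + lmul x2 y :> L.
Proof.
apply/rowP => r; rewrite !mxE -big_split; apply: eq_bigr => i _ /=.
rewrite -big_split; apply: eq_bigr => j _ /=; by rewrite !mxE mulrDl mulrnDl.
Qed.
Lemma lmulDr x y1 y2 : lmul x (y1 + y2) = lmul x y1 + lmul x y2 :> L.
Proof.
apply/rowP => r; rewrite !mxE -big_split; apply: eq_bigr => i _ /=.
rewrite -big_split; apply: eq_bigr => j _ /=; by rewrite !mxE mulrDr mulrnDl.
Qed.
Lemma lmulZl a x y : lmul (a *: x) y = a *: lmul x y :> L.
Proof.
apply/rowP => r; rewrite !mxE mulr_sumr; apply: eq_bigr => i _ /=.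
rewrite mulr_sumr; apply: eq_bigr => j _ /=; by rewrite !mxE -mulrA mulrnAr.
Qed.
Lemma lmulZr a x y : lmul x (a *: y) = a *: lmul x y :> L.
Proof.
apply/rowP => r; rewrite !mxE mulr_sumr; apply: eq_bigr => i _ /=.
rewrite mulr_sumr; apply: eq_bigr => j _ /=.
by rewrite !mxE mulrCA mulrnAr.
Qed.
Lemma lmul0l y : lmul 0 y = 0 :> L.
Proof. by rewrite -[X in lmul X _](scale0r (0:L)) lmulZl scale0r. Qed.
Lemma lmul0r x : lmul x 0 = 0 :> L.
Proof. by rewrite -[X in lmul _ X](scale0r (0:L)) lmulZr scale0r. Qed.
Lemma lmulNl x y : lmul (- x) y = - lmul x y :> L.
Proof. by rewrite -scaleN1r lmulZl scaleN1r. Qed.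
Lemma lmulNr x y : lmul x (- y) = - lmul x y :> L.
Proof. by rewrite -scaleN1r lmulZr scaleN1r. Qed.
Lemma lmulBl x1 x2 y : lmul (x1 - x2) y = lmul x1 y - lmul x2 y :> L.
Proof. by rewrite lmulDl lmulNl. Qed.
Lemma lmulBr x y1 y2 : lmul x (y1 - y2) = lmul x y1 - lmul x y2 :> L.
Proof. by rewrite lmulDr lmulNr. Qed.
Lemma lmul_suml I (r : seq I) (Pr : pred I) (F : I -> L) y :
  lmul (\sum_(i <- r | Pr i) F i) y = \sum_(i <- r | Pr i) lmul (F i) y.
Proof. exact: (big_morph (fun x => lmul x y) (fun a b => lmulDl a b y) (lmul0l y)). Qed.
Lemma lmul_sumr I (r : seq I) (Pr : pred I) (F : I -> L) x :
  lmul x (\sum_(i <- r | Pr i) F i) = \sum_(i <- r | Pr i) lmul x (F i).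
Proof. exact: (big_morph (fun y => lmul x y) (fun a b => lmulDr x a b) (lmul0r x)). Qed.

Lemma lam_ind (Q : L -> Prop) :
  Q 0 -> (forall x y, Q x -> Q y -> Q (x + y)) -> (forall a x, Q x -> Q (a *: x)) ->
  (forall i, Q (bvec k i)) -> forall x, Q x.
Proof.
move=> h0 hD hZ hb x; rewrite (row_sum_delta x).
apply: big_ind => //= j _; exact: hZ (hb j).
Qed.

Lemma lmul_vecw v1 w1 v2 w2 :
  lmul (vecw v1 w1) (vecw v2 w2) =
  if ptgt v1 w1 == v2 then vecw v1 (w1 ++ w2) else 0.
Proof.
apply/rowP => r; rewrite !mxE.
have E : forall i j : 'I_N,
  ((vecw v1 w1) 0 i * (vecw v2 w2) 0 j) *+ iscat (ev i) (ev j) (ev r) =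
  ([&& (bsrc (ev i) == v1), (bword (ev i) == w1), (bsrc (ev j) == v2),
      (bword (ev j) == w2) & iscat (ev i) (ev j) (ev r)])%:R.
  move=> i j; rewrite !mxE.
  by case: (_ == v1); case: (_ == w1); case: (_ == v2); case: (_ == w2);
     case: iscat; rewrite /= ?mul1r ?mul0r ?mulr0n ?mulr1n.
under eq_bigr do under eq_bigr do rewrite E.
set C := (ptgt v1 w1 == v2) && ((bsrc (ev r) == v1) && (bword (ev r) == w1 ++ w2)).
have -> : (if ptgt v1 w1 == v2 then vecw v1 (w1 ++ w2) else 0) 0 r = C%:R.
  rewrite /C; case: (ptgt v1 w1 == v2); by rewrite ?mxE.
case hC: C.
- move: hC; rewrite /C => /and3P[/eqP ht /eqP hs /eqP hw].
  have hpr := bpathP (ev r); rewrite hw hs ispath_cat in hpr.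
  case/andP: hpr => hp1 hp2.
  have hsz := bword_size (ev r); rewrite hw size_cat in hsz.
  have [p [ps pw]] := mkB hp1 (leq_ltn_trans (leq_addr _ _) hsz).
  have [q [qs qw]] := mkB hp2 (leq_ltn_trans (leq_addl _ _) hsz).
  rewrite ht in qs.
  rewrite (bigD1 (rk p)) //=.
  have -> : \sum_(i < N | i != rk p) \sum_(j < N) ([&& bsrc (ev i) == v1, bword (ev i) == w1,
        bsrc (ev j) == v2, bword (ev j) == w2 & iscat (ev i) (ev j) (ev r)])%:R = 0 :> k.
    apply: big1 => i hi; apply: big1 => j _; rewrite -(inj_eq ev_inj) evK in hi.
    case: (boolP (bsrc (ev i) == v1)) => //= /eqP e1.
    case: (boolP (bword (ev i) == w1)) => //= /eqP e2.
    by rewrite (bkey_inj (q:=p) (etrans e1 (esym ps)) (etrans e2 (esym pw))) eqxx in hi.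
  rewrite addr0 (bigD1 (rk q)) //=.
  have -> : \sum_(j < N | j != rk q) ([&& bsrc (ev (rk p)) == v1, bword (ev (rk p)) == w1,
        bsrc (ev j) == v2, bword (ev j) == w2 & iscat (ev (rk p)) (ev j) (ev r)])%:R = 0 :> k.
    apply: big1 => j hj; rewrite -(inj_eq ev_inj) evK in hj.
    case: (boolP (bsrc (ev j) == v2)); rewrite ?andbF //= => /eqP e1.
    case: (boolP (bword (ev j) == w2)); rewrite ?andbF //= => /eqP e2.
    by rewrite (bkey_inj (q:=q) (etrans e1 (esym qs)) (etrans e2 (esym qw))) eqxx in hj.
  rewrite addr0 !evK ps pw qs qw !eqxx /= /iscat /btgt pw ps qs ht hs hw !eqxx.
  by rewrite qw eqxx.
- apply: big1 => i _; apply: big1 => j _.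
  case: (boolP [&& _, _, _, _ & _]) => //= /and5P[/eqP e1 /eqP e2 /eqP e3 /eqP e4].
  case/and3P => /eqP ht /eqP hs /eqP hw.
  have ht' : ptgt v1 w1 = v2 by rewrite -e1 -e2 -e3; exact: ht.
  by move: hC; rewrite /C hs hw e1 e2 e4 ht' !eqxx.
Qed.

End Alg.


Section Alg2.
Variables (V A : finType) (s t : A -> V) (m : nat) (k : fieldType).
Local Notation P := (Bpaths s t m).
Local Notation N := (nB s t m).
Local Notation ptgt := (path_tgt s t).
Local Notation ispath := (is_path s t).
Local Notation L := (Lam s t m k).
Local Notation vecw := (@vecw V A s t m k).
Local Notation ev := (@ev V A s t m).
Local Notation rk := (@rk V A s t m).

Lemma bvec_ind (Q : L -> Prop) :
  Q 0 -> (forall x y, Q x -> Q y -> Q (x + y)) -> (forall a x, Q x -> Q (a *: x)) ->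
  (forall p : P, Q (vecw (bsrc p) (bword p))) -> forall x, Q x.
Proof. move=> h0 hD hZ hb; refine (lam_ind h0 hD hZ _) => i; rewrite bvecE; exact: hb. Qed.

Lemma lmulA (x y z : L) : lmul (lmul x y) z = lmul x (lmul y z).
Proof.
move: x y z; apply: bvec_ind.
- by move=> y z; rewrite !lmul0l.
- by move=> x1 x2 h1 h2 y z; rewrite !lmulDl h1 h2.
- by move=> a x h y z; rewrite !lmulZl h.
move=> p; apply: bvec_ind.
- by move=> z; rewrite lmul0r !lmul0l lmul0r.
- by move=> x1 x2 h1 h2 z; rewrite lmulDr !lmulDl lmulDr h1 h2.
- by move=> a x h z; rewrite lmulZr !lmulZl lmulZr h.
move=> q; apply: bvec_ind.
- by rewrite !lmul0r.
- by move=> x1 x2 h1 h2; rewrite !lmulDr h1 h2.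
- by move=> a x h; rewrite !lmulZr h.
move=> r.
rewrite !lmul_vecw.
case: (eqP (x:=ptgt (bsrc p) (bword p))) => [e1|ne1];
case: (eqP (x:=ptgt (bsrc q) (bword q))) => [e2|ne2];
rewrite ?lmul0l ?lmul0r ?lmul_vecw ?ptgt_cat ?e1 ?e2 ?eqxx ?catA //.
all: try (case: eqP => // ?; subst).
Qed.

Definition idem (v : V) : L := vecw v [::].
Definition one : L := \sum_v idem v.

Lemma lmul1x x : lmul one x = x.
Proof.
move: x; apply: bvec_ind.
- by rewrite lmul0r.
- by move=> x y h1 h2; rewrite lmulDr h1 h2.
- by move=> a x h; rewrite lmulZr h.
move=> p; rewrite /one lmul_suml.
under eq_bigr do rewrite /idem lmul_vecw /=.
by rewrite -big_mkcond big_pred1_eq.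
Qed.

Lemma lmulx1 x : lmul x one = x.
Proof.
move: x; apply: bvec_ind.
- by rewrite lmul0l.
- by move=> x y h1 h2; rewrite lmulDl h1 h2.
- by move=> a x h; rewrite lmulZl h.
move=> p; rewrite /one lmul_sumr.
under eq_bigr do rewrite /idem lmul_vecw cats0.
by rewrite -big_mkcond (big_pred1 (ptgt (bsrc p) (bword p))).
Qed.

Lemma lmul_idem v w : lmul (idem v) (idem w) = if v == w then idem v else 0.
Proof. by rewrite /idem lmul_vecw. Qed.

Lemma lmul_idem_l v (p : P) :
  lmul (idem v) (vecw (bsrc p) (bword p)) =
  if v == bsrc p then vecw (bsrc p) (bword p) else 0.
Proof. by rewrite /idem lmul_vecw /=; case: eqP => // ->. Qed.

Lemma lmul_idem_r v (p : P) :
  lmul (vecw (bsrc p) (bword p)) (idem v) =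
  if btgt p == v then vecw (bsrc p) (bword p) else 0.
Proof. by rewrite /idem lmul_vecw cats0. Qed.

End Alg2.


Section Der.
Variables (V A : finType) (s t : A -> V) (m : nat) (k : fieldType).
Local Notation P := (Bpaths s t m).
Local Notation N := (nB s t m).
Local Notation ptgt := (path_tgt s t).
Local Notation ispath := (is_path s t).
Local Notation L := (Lam s t m k).
Local Notation vecw := (@vecw V A s t m k).
Local Notation ev := (@ev V A s t m).
Local Notation rk := (@rk V A s t m).
Local Notation bv := (@bvec V A s t m k).

Lemma rearr3 (a : k) (u1 u2 v1 v2 w1 w2 : L) :
  a *: u1 + u2 - (a *: v1 + v2) - (a *: w1 + w2) = a *: (u1 - v1 - w1) + (u2 - v2 - w2).
Proof. by rewrite !opprD [a *: u1 + u2 + _]addrACA [_ + (- (a *: w1) - w2)]addrACA !scalerBr. Qed.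

Lemma der_defect_lin : linear (@der_defect V A s t m k).
Proof.
move=> a D1 D2; apply/ffunP => ij; rewrite !ffunE.
by rewrite !mulmxDr -!scalemxAr !lmulDl !lmulDr !lmulZl !lmulZr rearr3.
Qed.

HB.instance Definition _ := GRing.isLinear.Build k 'M[k]_N {ffun 'I_N * 'I_N -> L} *:%R
  (@der_defect V A s t m k) der_defect_lin.

Definition basis_der (D : 'M[k]_N) := forall i j,
  lmul (bv i) (bv j) *m D = lmul (bv i *m D) (bv j) + lmul (bv i) (bv j *m D).
Definition is_der (D : 'M[k]_N) := forall x y : L,
  lmul x y *m D = lmul (x *m D) y + lmul x (y *m D).

Lemma DerP D : reflect (basis_der D) (D \in Der s t m k).
Proof.
rewrite /Der memv_ker lfunE /=; apply: (iffP eqP) => h.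
  move=> i j; move/ffunP: h => /(_ (i, j)); rewrite !ffunE /= => /eqP.
  by rewrite -addrA -opprD subr_eq0 => /eqP.
apply/ffunP => [[i j]]; rewrite !ffunE /= h.
by rewrite -addrA -opprD subrr.
Qed.

Lemma basis_der_all D : basis_der D -> is_der D.
Proof.
move=> h; apply: lam_ind.
- by move=> y; rewrite !lmul0l mul0mx lmul0l add0r.
- move=> x1 x2 h1 h2 y; rewrite !lmulDl !mulmxDl h1 h2 lmulDl.
  by rewrite addrACA.
- by move=> a x hx y; rewrite !lmulZl -!scalemxAl hx !lmulZl scalerDr.

move=> i; apply: lam_ind.
- by rewrite !lmul0r mul0mx lmul0r addr0.
- move=> x1 x2 h1 h2; rewrite !lmulDr !mulmxDl h1 h2 lmulDr.
  by rewrite addrACA.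
- by move=> a x hx; rewrite !lmulZr -!scalemxAl hx !lmulZr scalerDr.
exact: h.
Qed.

Lemma DerP_all D : D \in Der s t m k -> is_der D.
Proof. by move/DerP; exact: basis_der_all. Qed.

Lemma ad_lin : linear (@ad V A s t m k).
Proof.
move=> a x y; apply/row_matrixP => i.
rewrite linearD linearZ /= !rowK lmulDl lmulDr lmulZl lmulZr.
by rewrite opprD addrACA scalerBr.
Qed.

HB.instance Definition _ := GRing.isLinear.Build k L 'M[k]_N *:%R
  (@ad V A s t m k) ad_lin.

Lemma adE (x a : L) : x *m ad a = lmul a x - lmul x a.
Proof.
rewrite mulmx_sum_row.
rewrite [in RHS](row_sum_delta x) lmul_sumr lmul_suml -sumrB.
apply: eq_bigr => i _; rewrite rowK lmulZr lmulZl scalerBr.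
done.
Qed.

Lemma InnP D : reflect (exists a, D = ad a) (D \in Inn s t m k).
Proof.
rewrite /Inn; apply: (iffP memv_imgP) => [[a _ ->]|[a ->]].
  by exists a; rewrite lfunE.
by exists a; rewrite ?memvf ?lfunE.
Qed.

Lemma ad_der a : ad a \in Der s t m k.
Proof.
apply/DerP => i j; rewrite !adE lmulBl lmulBr !lmulA.
by rewrite addrA subrK.
Qed.

Lemma Inn_sub_Der : (Inn s t m k <= Der s t m k)%VS.
Proof. by apply/subvP => D /InnP [a ->]; exact: ad_der. Qed.

End Der.


Section Decomp.
Variables (V A : finType) (s t : A -> V) (m : nat) (k : fieldType).
Local Notation P := (Bpaths s t m).
Local Notation N := (nB s t m).
Local Notation ptgt := (path_tgt s t).
Local Notation ispath := (is_path s t).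
Local Notation L := (Lam s t m k).
Local Notation vecw := (@vecw V A s t m k).
Local Notation ev := (@ev V A s t m).
Local Notation rk := (@rk V A s t m).
Local Notation bv := (@bvec V A s t m k).
Local Notation idem := (@idem V A s t m k).
Local Notation one := (@one V A s t m k).

Definition Emap (D : 'M[k]_N) : {ffun V -> L} := [ffun v => idem v *m D].

Lemma Emap_lin : linear Emap.
Proof.
move=> a D1 D2; apply/ffunP => v; rewrite !ffunE.
by rewrite mulmxDr -scalemxAr.
Qed.

HB.instance Definition _ := GRing.isLinear.Build k 'M[k]_N {ffun V -> L} *:%R
  Emap Emap_lin.

Definition Der0 : {vspace 'M[k]_N} := (Der s t m k :&: lker (linfun Emap))%VS.

Lemma Der0P D : reflect (D \in Der s t m k /\ forall v, idem v *m D = 0) (D \in Der0).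
Proof.
apply: (iffP memv_capP) => [[hD]|[hD h]].
  rewrite memv_ker lfunE /= => /eqP h; split => // v.
  by move/ffunP: h => /(_ v); rewrite !ffunE.
split => //; rewrite memv_ker lfunE /=; apply/eqP/ffunP => v.
by rewrite !ffunE h.
Qed.

Lemma lmul_idem_fun v w (x : L) :
  lmul x (lmul (idem v) (idem w)) = if v == w then lmul x (idem v) else 0.
Proof. by rewrite lmul_idem; case: eqP => _; rewrite ?lmul0r. Qed.

Lemma Der_decomp : (Der s t m k <= Der0 + Inn s t m k)%VS.
Proof.
apply/subvP => D hD.
have hL := DerP_all hD.
set y : L := \sum_v lmul (idem v *m D) (idem v).
have h1 : forall w, lmul y (idem w) = lmul (idem w *m D) (idem w).
  move=> w; rewrite /y lmul_suml.
  under eq_bigr => v _ do rewrite lmulA lmul_idem_fun.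
  by rewrite -big_mkcond big_pred1_eq.
have h2 : forall w, lmul (idem w) y = lmul (idem w *m D) (idem w) - idem w *m D.
  move=> w; rewrite /y lmul_sumr.
  have e : forall v, lmul (idem w) (lmul (idem v *m D) (idem v)) =
     (if w == v then lmul (idem w *m D) (idem w) else 0) - lmul (idem w *m D) (idem v).
    move=> v; rewrite -lmulA.
    have -> : lmul (idem w) (idem v *m D) =
              lmul (idem w) (idem v) *m D - lmul (idem w *m D) (idem v).
      by rewrite hL addrC addKr.
    rewrite lmulBl lmulA lmul_idem_fun eqxx lmul_idem.
    by case: eqP => [->|_]; rewrite ?mul0mx ?lmul0l.
  under eq_bigr => v _ do rewrite e.
  rewrite sumrB -big_mkcond /=.
  rewrite (big_pred1 w); last by move=> v; rewrite /= eq_sym.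
  by rewrite -lmul_sumr lmulx1.
have hE : D - ad y \in Der0.
  apply/Der0P; split.
    by rewrite memvB // ad_der.
  move=> w; rewrite mulmxBr adE h1 h2.
  by rewrite opprB addrAC subrr add0r subrr.
have -> : D = (D - ad y) + ad y by rewrite subrK.
apply: memv_add => //; apply/InnP; by exists y.
Qed.

Lemma Der_eq : Der s t m k = (Der0 + Inn s t m k)%VS.
Proof.
apply/eqP; rewrite eqEsubv Der_decomp /= subv_add; apply/andP; split.
  by apply/subvP => D /Der0P [].
exact: Inn_sub_Der.
Qed.

End Decomp.


Definition wsubst (A : Type) (e : seq A) (j : nat) (w : seq A) :=
  take j w ++ e ++ drop j.+1 w.

Lemma drop_catl (T : Type) n (w1 w2 : seq T) :
  (n <= size w1)%N -> drop n (w1 ++ w2) = drop n w1 ++ w2.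
Proof.
move=> h; rewrite drop_cat; case: ltnP => h2 //.
have e : n = size w1 by apply/eqP; rewrite eqn_leq h h2.
by rewrite e subnn drop0 drop_size.
Qed.

Section Dx.
Variables (V A : finType) (s t : A -> V) (m : nat) (k : fieldType).
Hypothesis hacyc : acyclic s t.
Hypothesis hm : (2 <= m)%N.
Local Notation P := (Bpaths s t m).
Local Notation N := (nB s t m).
Local Notation ptgt := (path_tgt s t).
Local Notation ispath := (is_path s t).
Local Notation L := (Lam s t m k).
Local Notation vecw := (@vecw V A s t m k).
Local Notation ev := (@ev V A s t m).
Local Notation rk := (@rk V A s t m).
Local Notation bv := (@bvec V A s t m k).
Local Notation idem := (@idem V A s t m k).

Definition Dw (a : A) (e : seq A) (v : V) (w : seq A) : L :=
  \sum_(0 <= j < size w | nth a w j == a) vecw v (wsubst e j w).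

Definition Dx (x : A * P) : 'M[k]_N :=
  \matrix_i Dw x.1 (bword x.2) (bsrc (ev i)) (bword (ev i)).

Lemma bv_mul i (M : 'M[k]_N) : bv i *m M = row i M.
Proof. by rewrite /bvec rowE. Qed.

Lemma vecw_mul (p : P) (M : 'M[k]_N) : vecw (bsrc p) (bword p) *m M = row (rk p) M.
Proof. by rewrite vecw_rk bv_mul. Qed.

Lemma vecw_Dx (p : P) x : vecw (bsrc p) (bword p) *m Dx x = Dw x.1 (bword x.2) (bsrc p) (bword p).
Proof. by rewrite vecw_mul rowK evK. Qed.

Lemma Dw_nil a e v : Dw a e v [::] = 0.
Proof. by rewrite /Dw big_geq. Qed.

Lemma Dw_cat a e v w1 w2 :
  Dw a e v (w1 ++ w2) =
  \sum_(0 <= j < size w1 | nth a w1 j == a) vecw v (wsubst e j w1 ++ w2) +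
  \sum_(0 <= j < size w2 | nth a w2 j == a) vecw v (w1 ++ wsubst e j w2).
Proof.
rewrite /Dw size_cat (big_cat_nat (leq0n (size w1)) (leq_addr _ _)) /=.
congr (_ + _).
  rewrite big_nat_cond [RHS]big_nat_cond.
  apply: eq_big => [j|j /andP [/andP [_ hj] _]].
    by case: (ltnP j (size w1)) => hj; rewrite ?nth_cat ?hj ?andbF.
  rewrite /wsubst take_cat hj drop_catl //.
  by rewrite -!catA.
rewrite -{1}(add0n (size w1)) big_addn addKn.
apply: eq_big => [j|j _].
  by rewrite nth_cat ltnNge leq_addl /= addnK.
rewrite /wsubst take_cat ltnNge leq_addl /= addnK drop_cat ltnNge.
rewrite -addSn leq_addl /= addnK.
by rewrite -!catA.
Qed.

Variable x : A * P.
Hypothesis hx : x \in Q1B s t m.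
Local Notation a := x.1.
Local Notation e := (bword x.2).

Lemma e_nonnil : e != [::].
Proof.
move: hx; rewrite inE => /andP [/eqP hs /eqP ht].
apply/negP => /eqP he.
have := hacyc (a:=a) (w:=[::]) is_true_true.
by rewrite /= -ht -hs /btgt he /=; rewrite eqxx.
Qed.

Lemma ptgt_e u : ptgt u e = t a.
Proof.
move: hx; rewrite inE => /andP [_ /eqP ht]; rewrite -ht /btgt.
by move: e_nonnil; case: (bword x.2).
Qed.

Lemma ptgt_subst v w j : (j < size w)%N -> nth a w j = a ->
  ptgt v (wsubst e j w) = ptgt v w.
Proof.
move=> hj hn.
have hw : w = take j w ++ [:: a] ++ drop j.+1 w.
  by rewrite /= -hn -drop_nth // cat_take_drop.
rewrite /wsubst {3}hw !ptgt_cat ptgt_e.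
done.
Qed.

Lemma size_subst w j : (j < size w)%N -> (size w <= size (wsubst e j w))%N.
Proof.
move=> hj; rewrite /wsubst !size_cat size_take hj size_drop.
have : (0 < size e)%N by move: e_nonnil; case: (bword x.2).
move=> he.
lia.
Qed.

Lemma lmul_Dw_l v1 w1 v2 w2 :
  lmul (Dw a e v1 w1) (vecw v2 w2) =
  if ptgt v1 w1 == v2 then
    \sum_(0 <= j < size w1 | nth a w1 j == a) vecw v1 (wsubst e j w1 ++ w2) else 0.
Proof.
rewrite /Dw lmul_suml big_nat_cond.
transitivity (\sum_(0 <= j < size w1 | (0 <= j < size w1)%N && (nth a w1 j == a))
   (if ptgt v1 w1 == v2 then vecw v1 (wsubst e j w1 ++ w2) else 0)).
  apply: eq_bigr => j /andP[/andP[_ hj] /eqP hn].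
  by rewrite lmul_vecw ptgt_subst.
case: eqP => _; first by rewrite -big_nat_cond.
by rewrite big1.
Qed.

Lemma lmul_Dw_r v1 w1 v2 w2 :
  lmul (vecw v1 w1) (Dw a e v2 w2) =
  if ptgt v1 w1 == v2 then
    \sum_(0 <= j < size w2 | nth a w2 j == a) vecw v1 (w1 ++ wsubst e j w2) else 0.
Proof.
rewrite /Dw lmul_sumr.
under eq_bigr do rewrite lmul_vecw.
by case: eqP => _; last rewrite big1.
Qed.

Lemma vecw_cat_Dx (p q : P) : btgt p = bsrc q ->
  vecw (bsrc p) (bword p ++ bword q) *m Dx x = Dw a e (bsrc p) (bword p ++ bword q).
Proof.
move=> h.
have hp : ispath (bsrc p) (bword p ++ bword q).
  by rewrite ispath_cat bpathP /=; move: (bpathP q); rewrite -h.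
case: (ltnP (size (bword p ++ bword q)) m) => hs.
  have [r [rs rw]] := mkB hp hs.
  by rewrite -rs -rw vecw_Dx.
rewrite vecw_long // mul0mx /Dw big_nat_cond big1 // => j /andP[/andP[_ hj] _].
by apply: vecw_long; exact: leq_trans hs (size_subst hj).
Qed.

Lemma Dx_der : Dx x \in Der s t m k.
Proof.
apply/DerP => i j.
rewrite !bv_mul !rowK [bv i]bvecE [bv j]bvecE lmul_vecw lmul_Dw_l lmul_Dw_r.
case: eqP => h.
  by rewrite (vecw_cat_Dx h) Dw_cat.
by rewrite mul0mx addr0.
Qed.

Lemma triv_ex v : {p : P | bsrc p = v /\ bword p = [::]}.
Proof. by apply: mkB => //; exact: leq_trans hm. Qed.

Lemma Dx_der0 : Dx x \in Der0 s t m k.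
Proof.
apply/Der0P; split; first exact: Dx_der.
move=> v; have [p [ps pw]] := triv_ex v.
by rewrite /idem -ps -pw vecw_Dx pw Dw_nil.
Qed.

End Dx.


Section Dim0.
Variables (V A : finType) (s t : A -> V) (m : nat) (k : fieldType).
Hypothesis hacyc : acyclic s t.
Hypothesis hm : (2 <= m)%N.
Local Notation P := (Bpaths s t m).
Local Notation N := (nB s t m).
Local Notation ptgt := (path_tgt s t).
Local Notation ispath := (is_path s t).
Local Notation L := (Lam s t m k).
Local Notation vecw := (@vecw V A s t m k).
Local Notation ev := (@ev V A s t m).
Local Notation rk := (@rk V A s t m).
Local Notation bv := (@bvec V A s t m k).
Local Notation idem := (@idem V A s t m k).
Local Notation Q := (Q1B s t m).

Lemma arr_ex a : {p : P | bsrc p = s a /\ bword p = [:: a]}.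
Proof. by apply: mkB => //=; rewrite eqxx. Qed.

Definition psi (D : 'M[k]_N) : 'rV[k]_#|Q| :=
  \row_(j < #|Q|) ((vecw (s (enum_val j).1) [:: (enum_val j).1] *m D) 0 (rk (enum_val j).2)).

Lemma psi_lin : linear psi.
Proof.
move=> c D1 D2; apply/rowP => j; rewrite !mxE.
rewrite mulr_sumr -big_split; apply: eq_bigr => i _ /=; rewrite !mxE. by rewrite mulrDr mulrCA.
Qed.

HB.instance Definition _ := GRing.isLinear.Build k 'M[k]_N 'rV[k]_#|Q| *:%R psi psi_lin.

Lemma Dw_single a e v b : Dw s t m k a e v [:: b] = if b == a then vecw v e else 0.
Proof. by rewrite /Dw /= big_mkcond big_nat1 /= /wsubst /= cats0. Qed.

Lemma psi_Dx (i : 'I_#|Q|) : psi (Dx k (enum_val i)) = delta_mx 0 i.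
Proof.
apply/rowP => j; rewrite [LHS]mxE [RHS]mxE.
have hj := enum_valP j; have hi := enum_valP i.
have [p [ps pw]] := arr_ex (enum_val j).1.
rewrite -ps -pw vecw_Dx ps pw Dw_single.
move: hj hi; rewrite !inE => /andP[/eqP hjs _] /andP[/eqP his _].
case: eqP => [ea|na].
  rewrite mxE evK hjs eqxx /=; congr ((nat_of_bool _)%:R).
  apply/idP/idP => [/eqP ew|/eqP ->] //.
  apply/eqP; apply: enum_val_inj.
  have : (enum_val j).2 = (enum_val i).2.
    by apply: bkey_inj => //; rewrite hjs his ea.
  by move: ea; case: (enum_val j) => ??; case: (enum_val i) => ?? /= -> ->.
rewrite mxE eqxx /=; case: (eqVneq j i) => [eji|//]; case: na; by rewrite eji.
Qed.

Definition cmask (u w : V) (y : L) : L :=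
  \row_r (((u == bsrc (ev r)) && (btgt (ev r) == w))%:R * y 0 r).

Lemma sandwich u w (y : L) : lmul (lmul (idem u) y) (idem w) = cmask u w y.
Proof.
move: y; apply: bvec_ind.
- by rewrite lmul0r lmul0l; apply/rowP => r; rewrite !mxE mulr0.
- move=> x y h1 h2; rewrite lmulDr lmulDl h1 h2; apply/rowP => r; rewrite !mxE.
  by rewrite mulrDr.
- move=> a x h; rewrite lmulZr lmulZl h; apply/rowP => r; rewrite !mxE.
  by rewrite mulrCA.
move=> p; rewrite lmul_idem_l.
case: (eqVneq u (bsrc p)) => [eu|nu] /=; rewrite ?lmul0l ?lmul_idem_r;
 [case: (eqVneq (btgt p) w) => [ew|nw] /= | ];
 apply/rowP => r; rewrite !mxE;
 (case: (boolP ((bsrc (ev r) == bsrc p) && (bword (ev r) == bword p))) => [/andP[/eqP e1 /eqP e2]|hn];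
  [ rewrite (bkey_inj e1 e2) ?eu ?ew ?(negbTE nu) ?(negbTE nw) ?eqxx /= ?mul1r ?mul0r ?mulr0 //
  | by rewrite ?(negbTE hn) ?mulr0 ]).
Qed.

Lemma Der0_psi0 D : D \in Der0 s t m k -> psi D = 0 -> D = 0.
Proof.
move=> /Der0P [hD hE] hpsi; have hL := DerP_all hD.
have harr : forall a, vecw (s a) [:: a] *m D = 0.
  move=> a.
  have e1 : vecw (s a) [:: a] = lmul (idem (s a)) (vecw (s a) [:: a]).
    by rewrite /idem lmul_vecw /= eqxx.
  have e2 : vecw (s a) [:: a] = lmul (vecw (s a) [:: a]) (idem (t a)).
    by rewrite /idem lmul_vecw /= eqxx ?cats0.
  have hY1 : vecw (s a) [:: a] *m D = lmul (idem (s a)) (vecw (s a) [:: a] *m D).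
    by rewrite {1}e1 hL hE lmul0l add0r.
  have hY2 : vecw (s a) [:: a] *m D = lmul (vecw (s a) [:: a] *m D) (idem (t a)).
    by rewrite {1}e2 hL hE lmul0r addr0.
  apply/rowP => r; rewrite hY2 hY1 sandwich !mxE.
  case hc: ((s a == bsrc (ev r)) && (btgt (ev r) == t a)); last by rewrite mul0r.
  have hq : (a, ev r) \in Q by rewrite inE /= eq_sym.
  have := congr1 (fun c : 'rV[k]_#|Q| => c 0 (enum_rank_in hq (a, ev r))) hpsi.
  rewrite !mxE (enum_rankK_in hq hq) /= rkK => ->.
  by rewrite mulr0.
have hall : forall n (p : P), (size (bword p) < n)%N -> vecw (bsrc p) (bword p) *m D = 0.
  elim=> [//|n IH] p hn.
  case hw: (bword p) => [|a w'].
    by have := hE (bsrc p); rewrite /idem.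
  have hp := bpathP p; rewrite hw /= in hp; case/andP: hp => /eqP hsa _.
  have hp' : ispath (t a) w'.
    by have := bpathP p; rewrite hw -cat1s ispath_cat => /andP[_].
  have hs' : (size w' < m)%N.
    by have := bword_size p; rewrite hw /=; apply: ltnW.
  have [q [qs qw]] := mkB hp' hs'.
  have -> : vecw (bsrc p) (a :: w') = lmul (vecw (s a) [:: a]) (vecw (bsrc q) (bword q)).
    by rewrite qs qw lmul_vecw /= eqxx hsa.
  rewrite hL harr lmul0l add0r IH ?lmul0r //.
  by move: hn; rewrite hw qw.
apply/row_matrixP => i; rewrite row0 -bv_mul bvecE; exact: hall _ _ (ltnSn _).
Qed.

Lemma dim_Der0 : \dim (Der0 s t m k) = #|Q|.
Proof.
have := limg_ker_dim (linfun psi) (Der0 s t m k).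
have -> : (Der0 s t m k :&: lker (linfun psi) = 0)%VS.
  apply/eqP; rewrite -subv0; apply/subvP => D /memv_capP[h1].
  rewrite memv_ker lfunE /= => /eqP h2; rewrite memv0; apply/eqP; exact: Der0_psi0.
have -> : (linfun psi @: Der0 s t m k = fullv)%VS.
  apply/eqP; rewrite eqEsubv subvf /=; apply/subvP => c _; apply/memv_imgP.
  exists (\sum_i c 0 i *: Dx k (enum_val i)).
    apply: memv_suml => i _; apply: memvZ; apply: Dx_der0 => //; exact: enum_valP.
  rewrite lfunE /= linear_sum /= {1}(row_sum_delta c); apply: eq_bigr => i _.
  by rewrite linearZ /= psi_Dx.
by rewrite dimv0 add0n dimvf dim_matrix /= mul1r.
Qed.

End Dim0.


Section DimI.
Variables (V A : finType) (s t : A -> V) (m : nat) (k : fieldType).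
Hypothesis hV : (0 < #|V|)%N.
Hypothesis hconn : qconnected s t.
Hypothesis hacyc : acyclic s t.
Hypothesis hm : (2 <= m)%N.
Local Notation P := (Bpaths s t m).
Local Notation N := (nB s t m).
Local Notation ptgt := (path_tgt s t).
Local Notation ispath := (is_path s t).
Local Notation L := (Lam s t m k).
Local Notation vecw := (@vecw V A s t m k).
Local Notation ev := (@ev V A s t m).
Local Notation rk := (@rk V A s t m).
Local Notation bv := (@bvec V A s t m k).
Local Notation idem := (@idem V A s t m k).
Local Notation one := (@one V A s t m k).

Lemma acyc_nil v w : ispath v w -> ptgt v w = v -> w = [::].
Proof.
case: w => [//|a w] /= /andP[/eqP hs hp] ht.
by have := hacyc hp; rewrite ht hs eqxx.
Qed.

Lemma conn_const (f : V -> k) : (forall a, f (s a) = f (t a)) -> forall u v, f u = f v.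
Proof.
move=> h u v.
have hcl : closed (fun x y => [exists a : A, ((s a == x) && (t a == y))
                                     || ((s a == y) && (t a == x))]) [pred x | f x == f u].
  move=> x y /existsP[a /orP[/andP[/eqP hs /eqP ht]|/andP[/eqP hs /eqP ht]]] /=.
    by rewrite !inE -hs -ht h.
  by rewrite !inE -hs -ht h.
have := closed_connect hcl (hconn u v).
by rewrite !inE eqxx => /esym/eqP.
Qed.

Definition trivp (v : V) : P := sval (triv_ex s t hm v).
Lemma trivp_src v : bsrc (trivp v) = v.
Proof. by rewrite /trivp; case: (triv_ex s t hm v) => p []. Qed.
Lemma trivp_word v : bword (trivp v) = [::].
Proof. by rewrite /trivp; case: (triv_ex s t hm v) => p []. Qed.

Definition iota_ (c : 'rV[k]_#|V|) : L := \sum_v c 0 (enum_rank v) *: idem v.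

Definition Fm (c : 'rV[k]_#|V|) : 'M[k]_N := ad (iota_ c).

Lemma Fm_lin : linear Fm.
Proof.
move=> a c1 c2; rewrite /Fm /iota_ -linearP /=; congr ad.
rewrite scaler_sumr -big_split; apply: eq_bigr => v _ /=.
by rewrite !mxE scalerDl scalerA.
Qed.

HB.instance Definition _ := GRing.isLinear.Build k 'rV[k]_#|V| 'M[k]_N *:%R Fm Fm_lin.

Lemma cmask_diag w (x : L) : cmask w w x = x 0 (rk (trivp w)) *: idem w.
Proof.
apply/rowP => r; rewrite /idem !mxE.
case: (boolP ((w == bsrc (ev r)) && (btgt (ev r) == w))) => [/andP[/eqP e1 /eqP e2]|hn].
  have hw : bword (ev r) = [::].
    apply: (acyc_nil (v := bsrc (ev r))); first exact: bpathP.
    exact: (etrans e2 e1).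
  have er : ev r = trivp w by apply: bkey_inj; rewrite ?trivp_src ?trivp_word.
  by rewrite -er rkK -e1 hw !eqxx mul1r mulr1.
rewrite mul0r.
case: (boolP ((bsrc (ev r) == w) && (bword (ev r) == [::]))) => [/andP[/eqP e1 /eqP e2]|hn2].
  by move: hn; rewrite /btgt e1 e2 /= eqxx.
by rewrite mulr0.
Qed.

Lemma commute_diag (x : L) : (forall w, lmul x (idem w) = lmul (idem w) x) ->
  x = iota_ (\row_j x 0 (rk (trivp (enum_val j)))).
Proof.
move=> hc.
transitivity (lmul (lmul one x) one); first by rewrite lmul1x lmulx1.
rewrite /one !lmul_suml; under eq_bigr do rewrite lmul_sumr.
rewrite /iota_; apply: eq_bigr => w _.
rewrite (bigD1 w) //= big1 ?addr0.
  by rewrite sandwich cmask_diag mxE enum_rankK.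
move=> v hv; rewrite lmulA hc -lmulA lmul_idem.
by rewrite eq_sym (negbTE hv) lmul0l.
Qed.

Lemma ad_one : ad one = 0.
Proof.
apply/row_matrixP => i; rewrite rowK row0 lmul1x lmulx1.
by rewrite subrr.
Qed.

Lemma iota_idem_l c (p : P) :
  lmul (iota_ c) (vecw (bsrc p) (bword p)) = c 0 (enum_rank (bsrc p)) *: vecw (bsrc p) (bword p).
Proof.
rewrite /iota_ lmul_suml.
under eq_bigr do rewrite lmulZl lmul_idem_l fun_if scaler0.
by rewrite -big_mkcond big_pred1_eq.
Qed.

Lemma iota_idem_r c (p : P) :
  lmul (vecw (bsrc p) (bword p)) (iota_ c) = c 0 (enum_rank (btgt p)) *: vecw (bsrc p) (bword p).
Proof.
rewrite /iota_ lmul_sumr.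
under eq_bigr do rewrite lmulZr lmul_idem_r fun_if scaler0.
by rewrite -big_mkcond (big_pred1 (btgt p)).
Qed.

Lemma vecw_neq0 (p : P) : vecw (bsrc p) (bword p) != 0.
Proof.
apply/eqP => /rowP /(_ (rk p)); rewrite !mxE evK !eqxx /=.
by move/eqP; rewrite oner_eq0.
Qed.

Lemma ker_Fm : (lker (linfun Fm) = <[const_mx 1]>)%VS.
Proof.
apply/eqP; rewrite eqEsubv; apply/andP; split; apply/subvP => c.
  rewrite memv_ker lfunE /= => /eqP hF.
  have hs : forall a, c 0 (enum_rank (s a)) = c 0 (enum_rank (t a)).
    move=> a; have [p [ps pw]] := arr_ex s t hm a.
    have := congr1 (fun M => vecw (bsrc p) (bword p) *m M) hF.
    rewrite /= mulmx0 /Fm adE iota_idem_l iota_idem_r -scalerBl.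
    move/eqP; rewrite scaler_eq0 (negbTE (vecw_neq0 p)) orbF subr_eq0 => /eqP.
    by rewrite ps /btgt ps pw.
  have hc := conn_const (f := fun v => c 0 (enum_rank v)) hs.
  apply/vlineP; exists (c 0 (enum_rank (enum_val (Ordinal hV)))).
  apply/rowP => j; rewrite !mxE mulr1.
  by rewrite -{1}(enum_valK j); apply: hc.
move/vlineP => [a ->]; rewrite memv_ker lfunE /= linearZ /=.
have -> : Fm (const_mx 1) = ad one.
  rewrite /Fm /iota_ /one; congr ad; apply: eq_bigr => v _.
  by rewrite mxE scale1r.
by rewrite ad_one scaler0.
Qed.

Lemma Der0_Inn : (Der0 s t m k :&: Inn s t m k = linfun Fm @: fullv)%VS.
Proof.
apply/eqP; rewrite eqEsubv; apply/andP; split; apply/subvP => D.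
  move/memv_capP => [/Der0P [hD hE] /InnP [x eD]]; subst D.
  apply/memv_imgP; exists (\row_j x 0 (rk (trivp (enum_val j)))).
    exact: memvf.
  rewrite lfunE /= /Fm -commute_diag //.
  move=> w; have := hE w; rewrite adE => /eqP; rewrite subr_eq0 => /eqP.
  by [].
move/memv_imgP => [c _ ->]; rewrite lfunE /=.
apply/memv_capP; split; last by apply/InnP; exists (iota_ c).
apply/Der0P; split; first exact: ad_der.
move=> w; rewrite adE /iota_ lmul_suml lmul_sumr -sumrB.
apply: big1 => v _; rewrite lmulZl lmulZr -scalerBr !lmul_idem eq_sym.
by case: eqP => [->|_]; rewrite subrr scaler0.
Qed.

Lemma dim_Der0_Inn : (\dim (Der0 s t m k :&: Inn s t m k) + 1 = #|V|)%N.
Proof.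
rewrite Der0_Inn.
have hd : \dim (fullv : {vspace 'rV[k]_#|V|}) = #|V|.
  by rewrite dimvf dim_matrix /= mul1r.
have h1 : const_mx 1 != 0 :> 'rV[k]_#|V|.
  apply/eqP => /rowP /(_ (Ordinal hV)); rewrite !mxE => /eqP.
  by rewrite oner_eq0.
have := limg_ker_dim (linfun Fm) fullv.
rewrite capfv ker_Fm dim_vline h1 hd.
by move=> H; rewrite addnC.
Qed.

End DimI.


Theorem theorem6p1 (k : fieldType) (V A : finType) (s t : A -> V) (m : nat)
  (hV : (0 < #|V|)%N) (hconn : qconnected s t) (hacyc : acyclic s t)
  (hm : (2 <= m)%N) :
  HH1dim s t m k = 1 - (#|V|)%:Z + (#|Q1B s t m|)%:Z.
Proof.
have h1 := dimv_sum_cap (Der0 s t m k) (Inn s t m k).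
rewrite -Der_eq (dim_Der0 k hacyc hm) in h1.
have h2 := dim_Der0_Inn k hV hconn hacyc hm.
rewrite /HH1dim; lia.
Qed.
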